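(* Let $(X,Y,G)$ be random with $X\in\mathcal{X}$, $Y\in\{0,1\}$, $G\in\{a,b\}$, $\Pr[G=g]>0$ and $0<p_g<1$ for $g\in\{a,b\}$, where $p_g:=\Pr[Y=1\mid G=g]$, and $\Delta p:=p_a-p_b\neq0$. Let $k$ be a measurable positive-definite kernel on $\mathcal{X}$ with RKHS $\mathcal{H}$, feature map $\phi$ and $\sup_x k(x,x)\le\kappa^2<\infty$. Let $P_g$ be the law of $X$ given $G=g$, $Q:=\tfrac12(P_a+P_b)$, $\mu:=\mathbb{E}_{X\sim Q}[\phi(X)]$, $\Sigma:=\mathbb{E}_{X\sim Q}[(\phi(X)-\mu)\otimes(\phi(X)-\mu)]=\sum_j\lambda_j e_j\otimes e_j$ with $\lambda_1\ge\lambda_2\ge\cdots\ge0$ and $\{e_j\}$ orthonormal, and assume there exist $\alpha>1$, $c_1,c_2>0$ with $c_1j^{-\alpha}\le\lambda_j\le c_2j^{-\alpha}$ for all $j$. Let $\mu_{y,g}:=\mathbb{E}[\phi(X)\mid Y=y,G=g]$, $\delta_y:=\mu_{y,a}-\mu_{y,b}$, and assume, for fixed $r>0$, $R>0$, that $\delta_y=\Sigma^r u_y$ with $\|u_y\|_{\mathcal{H}}\le R$ for $y\in\{0,1\}$. Let $S=\langle w,\phi(X)\rangle_{\mathcal{H}}\in[0,1]$ a.s. with $\|w\|_{\mathcal{H}}\le W$ and $\mathbb{E}[S\mid G=g]=p_g$ for $g\in\{a,b\}$. Let $V_m:=\operatorname{span}\{e_1,\dots,e_m\}$ and suppose $P_{V_m}\delta_y=0$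 for $y\in\{0,1\}$. Then, with $\rho_m:=\max_{h\in\{a,b\}}[p_h\|\delta_1\|_{\mathcal{H}}+(1-p_h)\|\delta_0\|_{\mathcal{H}}]$, \[\rho_m\le R\lambda_{m+1}^r=\Theta\big(R(m+1)^{-\alpha r}\big),\quad\text{hence}\quad \Pr[|S-Y|>t]\le\frac{W R\lambda_{m+1}^r}{|\Delta p|\,t}\ \text{ for all } t\in(0,1].\] Moreover, if these hypotheses (for the fixed distribution and fixed $S$) hold for a sequence of values $m\to\infty$, then $S=Y$ almost surely.
   Context: $P_{V_m}$ is the orthogonal projection onto $V_m$; $\Sigma^r$ is defined by functional calculus ($\Sigma^re_j=\lambda_j^re_j$). Implicit constants in $\Theta$ depend only on $c_1,c_2,r$. *)

(* Defs.v *)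
From HB Require Import structures.
From mathcomp Require Import all_boot all_order all_algebra.
From mathcomp Require Import all_classical all_reals all_analysis.
Set Implicit Arguments. Unset Strict Implicit. Unset Printing Implicit Defensive.
Import Order.TTheory GRing.Theory Num.Theory.
Import numFieldNormedType.Exports.
Local Open Scope classical_set_scope.
Local Open Scope ring_scope.

Section Hilbert.
Context {R : realType} {H : lmodType R}.

Definition hnorm (inner : H -> H -> R) (x : H) : R := Num.sqrt (inner x x).

Definition hlim (inner : H -> H -> R) (u : nat -> H) (l : H) : Prop :=
  forall eps : R, 0 < eps -> exists N : nat, forall n : nat,
    (N <= n)%N -> hnorm inner (u n - l) < eps.

Definition hcauchy (inner : H -> H -> R) (u : nat -> H) : Prop :=
  forall eps : R, 0 < eps -> exists N : nat, forall n p : nat,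
    (N <= n)%N -> (N <= p)%N -> hnorm inner (u n - u p) < eps.

Definition is_hilbert (inner : H -> H -> R) : Prop :=
  [/\ (forall x y, inner x y = inner y x),
      (forall a x y z, inner (a *: x + y) z = a * inner x z + inner y z),
      (forall x, 0 <= inner x x),
      (forall x, inner x x = 0 -> x = 0)
    & (forall u, hcauchy inner u -> exists l, hlim inner u l)].

Definition in_span (A : set H) (v : H) : Prop :=
  exists (n : nat) (c : nat -> R) (a : nat -> H),
    (forall i, (i < n)%N -> A (a i)) /\ v = \sum_(i < n) c i *: a i.

(* orthogonal projection onto V_m = span{e_1,...,e_m}, e orthonormal *)
Definition projV (inner : H -> H -> R) (e : nat -> H) (m : nat) (v : H) : H :=
  \sum_(1 <= j < m.+1) inner (e j) v *: e j.

End Hilbert.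

Definition is_rkhs {R : realType} {Xs : Type} {H : lmodType R}
  (inner : H -> H -> R) (k : Xs -> Xs -> R) (phi : Xs -> H) : Prop :=
  [/\ is_hilbert inner,
      (forall x y, inner (phi x) (phi y) = k x y)
    & (forall h (eps : R), 0 < eps ->
         exists v, in_span (range phi) v /\ hnorm inner (h - v) < eps)].

Definition pd_kernel {R : realType} {Xs : Type} (k : Xs -> Xs -> R) : Prop :=
  (forall x y, k x y = k y x) /\
  (forall (n : nat) (c : nat -> R) (x : nat -> Xs),
     0 <= \sum_(i < n) \sum_(j < n) c i * c j * k (x i) (x j)).

Section Prob.
Context {d : measure_display} {T : measurableType d} {R : realType}.
Variable P : probability T R.

Definition prob (A : set T) : R := fine (P A).

Definition cexp (A : set T) (f : T -> R) : R :=
  (\int[P]_(w in A) f w) / prob A.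

End Prob.

(* Main.v *)
Require Import Defs.
From HB Require Import structures.
From mathcomp Require Import all_boot all_order all_algebra.
From mathcomp Require Import all_classical all_reals all_analysis.
From mathcomp Require Import ring lra measurable_realfun.
Import Order.TTheory GRing.Theory Num.Theory.
Import numFieldNormedType.Exports.
Local Open Scope classical_set_scope.
Local Open Scope ring_scope.
Set Implicit Arguments. Unset Strict Implicit. Unset Printing Implicit Defensive.
Section Hil.
Context {R : realType} {H : lmodType R} (inner : H -> H -> R).
Hypothesis isym : forall x y, inner x y = inner y x.
Hypothesis ilin : forall a x y z, inner (a *: x + y) z = a * inner x z + inner y z.
Hypothesis ipos : forall x, 0 <= inner x x.
Hypothesis idef : forall x, inner x x = 0 -> x = 0.

Lemma inner0l z : inner 0 z = 0.
Proof using isym ilin ipos idef. have := ilin 1 0 0 z; rewrite scaler0 addr0 mul1r => h; lra. Qed.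
Lemma inner0r z : inner z 0 = 0.
Proof using isym ilin ipos idef. by rewrite isym inner0l. Qed.
Lemma innerDl x y z : inner (x + y) z = inner x z + inner y z.
Proof using isym ilin ipos idef. by have := ilin 1 x y z; rewrite scale1r mul1r. Qed.
Lemma innerZl a x z : inner (a *: x) z = a * inner x z.
Proof using isym ilin ipos idef. by have := ilin a x 0 z; rewrite addr0 inner0l addr0. Qed.
Lemma innerNl x z : inner (- x) z = - inner x z.
Proof using isym ilin ipos idef. by rewrite -scaleN1r innerZl mulN1r. Qed.
Lemma innerBl x y z : inner (x - y) z = inner x z - inner y z.
Proof using isym ilin ipos idef. by rewrite innerDl innerNl. Qed.
Lemma innerDr x y z : inner z (x + y) = inner z x + inner z y.
Proof using isym ilin ipos idef. by rewrite isym innerDl !(isym z). Qed.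
Lemma innerZr a x z : inner z (a *: x) = a * inner z x.
Proof using isym ilin ipos idef. by rewrite isym innerZl isym. Qed.
Lemma innerBr x y z : inner z (x - y) = inner z x - inner z y.
Proof using isym ilin ipos idef. by rewrite isym innerBl !(isym z). Qed.
Lemma inner_sumr I (s : seq I) (P : pred I) (F : I -> H) z :
  inner z (\sum_(i <- s | P i) F i) = \sum_(i <- s | P i) inner z (F i).
Proof using isym ilin ipos idef.
elim/big_rec2: _ => [|i y1 y2 _ <-]; first by rewrite inner0r.
by rewrite innerDr.
Qed.
Lemma inner_suml I (s : seq I) (P : pred I) (F : I -> H) z :
  inner (\sum_(i <- s | P i) F i) z = \sum_(i <- s | P i) inner (F i) z.
Proof using isym ilin ipos idef. by rewrite isym inner_sumr; apply: eq_bigr => i _; rewrite isym. Qed.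

Lemma CS x y : inner x y ^+ 2 <= inner x x * inner y y.
Proof using isym ilin ipos idef.
set a := inner x y; set b := inner y y.
have [b0|bn0] := eqVneq b 0.
  by rewrite /a (idef b0) inner0r expr0n /= b0 mulr0.
have bp : 0 < b by rewrite lt0r bn0 ipos.
have := ipos (b *: x - a *: y).
rewrite !innerBl !innerBr !innerZl !innerZr -/a -/b (isym y x) -/a => h.
have : 0 <= b * (b * inner x x - a ^+ 2) by nra.
rewrite pmulr_rge0 // subr_ge0 => h2; nra.
Qed.

Lemma hnorm_ge0 x : 0 <= hnorm inner x.
Proof using isym ilin ipos idef. exact: sqrtr_ge0. Qed.
Lemma hnorm_sq x : hnorm inner x ^+ 2 = inner x x.
Proof using isym ilin ipos idef. by rewrite sqr_sqrtr. Qed.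

Lemma CSn x y : `|inner x y| <= hnorm inner x * hnorm inner y.
Proof using isym ilin ipos idef.
rewrite -(ler_pXn2r (n:=2)) ?nnegrE ?normr_ge0 ?mulr_ge0 ?hnorm_ge0 //.
by rewrite real_normK ?num_real // exprMn !hnorm_sq CS.
Qed.

Lemma hnorm_tri x y : hnorm inner (x + y) <= hnorm inner x + hnorm inner y.
Proof using isym ilin ipos idef.
rewrite -(ler_pXn2r (n:=2)) ?nnegrE ?addr_ge0 ?hnorm_ge0 //.
rewrite hnorm_sq innerDl !innerDr sqrrD !hnorm_sq (isym y x) mulr2n.
have := CSn x y; have := ler_norm (inner x y); lra.
Qed.

Lemma hnormN x : hnorm inner (- x) = hnorm inner x.
Proof using isym ilin ipos idef. by rewrite /hnorm innerNl (isym x (- x)) innerNl opprK. Qed.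
Lemma hnormB x y : hnorm inner (x - y) = hnorm inner (y - x).
Proof using isym ilin ipos idef. by rewrite -hnormN opprB. Qed.
Lemma hnorm0 : hnorm inner 0 = 0.
Proof using isym ilin ipos idef. by rewrite /hnorm inner0l sqrtr0. Qed.

Variable e : nat -> H.
Hypothesis eorth : forall i j, (0 < i)%N -> (0 < j)%N -> inner (e i) (e j) = (i == j)%:R.

Lemma inner_e_sum (a : nat -> R) n i : (0 < i)%N ->
  inner (e i) (\sum_(1 <= j < n.+1) a j *: e j) = if (i <= n)%N then a i else 0.
Proof using isym ilin ipos idef eorth.
move=> i0; elim: n => [|n IH].
  by rewrite big_geq // inner0r; case: i i0.
rewrite big_nat_recr //= innerDr IH innerZr eorth //.
have [lt|ge] := ltnP i n.+1.
  by rewrite -ltnS lt (ltn_eqF lt) mulr0 addr0 ltnW.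
have -> : (i <= n)%N = false by apply/negbTE; rewrite -ltnNge.
case: (eqVneq i n.+1) => [->|ne]; first by rewrite ltnSn mulr1 add0r.
by rewrite leq_eqVlt (negbTE ne) /= ltnNge ge /= mulr0 addr0.
Qed.

Lemma inner_sum_sum (a : nat -> R) n :
  inner (\sum_(1 <= j < n.+1) a j *: e j) (\sum_(1 <= j < n.+1) a j *: e j)
  = \sum_(1 <= j < n.+1) a j ^+ 2.
Proof using isym ilin ipos idef eorth.
rewrite inner_suml; apply: eq_big_nat => j /andP[j1 jn].
by rewrite innerZl inner_e_sum // -ltnS jn expr2.
Qed.

Lemma bessel u n : \sum_(1 <= j < n.+1) inner (e j) u ^+ 2 <= inner u u.
Proof using isym ilin ipos idef eorth.
set S := \sum_(1 <= j < n.+1) inner (e j) u *: e j.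
have hSu : inner S u = \sum_(1 <= j < n.+1) inner (e j) u ^+ 2.
  rewrite inner_suml; apply: eq_big_nat => j _.
  by rewrite innerZl expr2.
have := ipos (u - S).
rewrite innerBl !innerBr inner_sum_sum (isym u S) hSu.
lra.
Qed.

Lemma hnorm_e i : (0 < i)%N -> hnorm inner (e i) = 1.
Proof using isym ilin ipos idef eorth. by move=> i0; rewrite /hnorm eorth // eqxx sqrtr1. Qed.

Lemma coef_lim (D : nat -> H) d i b : (0 < i)%N -> hlim inner D d ->
  (forall n, (i <= n)%N -> inner (e i) (D n) = b) -> inner (e i) d = b.
Proof using isym ilin ipos idef eorth.
move=> i0 hl hD; apply/eqP; rewrite -subr_eq0 -normr_eq0; apply/negPn/negP => ne.
have ep : 0 < `|inner (e i) d - b| by rewrite lt_def ne normr_ge0.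
have [N HN] := hl _ ep.
have := HN (maxn N i) (leq_maxl _ _).
rewrite -(hD (maxn N i) (leq_maxr _ _)) -innerBr.
have := CSn (e i) (d - D (maxn N i)).
rewrite hnorm_e // mul1r hnormB => h1 h2.
by have := le_lt_trans h1 h2; rewrite ltxx.
Qed.

Lemma norm_lim (D : nat -> H) d B : hlim inner D d ->
  (forall n, hnorm inner (D n) <= B) -> hnorm inner d <= B.
Proof using isym ilin ipos idef eorth.
move=> hl hB; have [//|lt] := leP (hnorm inner d) B.
have ep : 0 < hnorm inner d - B by rewrite subr_gt0.
have [N HN] := hl _ ep.
have h1 := HN N (leqnn N).
have h2 := hnorm_tri (D N) (d - D N).
rewrite addrC subrK in h2.
have := hB N; rewrite hnormB in h1; lra.
Qed.

Lemma tail_bound (b : nat -> R) u d m B : 0 <= B ->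
  (forall j, (m < j)%N -> `|b j| <= B) ->
  hlim inner (fun n => \sum_(1 <= j < n.+1) (b j * inner (e j) u) *: e j) d ->
  projV inner e m d = 0 -> hnorm inner d <= B * hnorm inner u.
Proof using isym ilin ipos idef eorth.
move=> B0 hb hl hP.
have coef i : (0 < i)%N -> inner (e i) d = b i * inner (e i) u.
  move=> i0; apply: (coef_lim i0 hl) => n iN.
  by rewrite inner_e_sum // iN.
have zero i : (0 < i)%N -> (i <= m)%N -> b i * inner (e i) u = 0.
  move=> i0 im; rewrite -coef //.
  have := inner_e_sum (fun j => inner (e j) d) m i0.
  rewrite im -/(projV inner e m d) hP inner0r => <- //.
apply: norm_lim hl _ => n.
rewrite -(ler_pXn2r (n:=2)) ?nnegrE ?mulr_ge0 ?hnorm_ge0 //.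
rewrite hnorm_sq inner_sum_sum exprMn hnorm_sq.
apply: le_trans (ler_wpM2l (sqr_ge0 B) (bessel u n)).
rewrite mulr_sumr big_nat_cond [X in _ <= X]big_nat_cond.
apply: ler_sum => j /andP[/andP[j1 _] _].
have [jm|mj] := leqP j m.
  by rewrite zero // expr0n /= mulr_ge0 ?sqr_ge0.
rewrite exprMn ler_wpM2r ?sqr_ge0 //.
move: (hb j mj); rewrite ler_norml => /andP[h1 h2]; nra.
Qed.

End Hil.
Lemma meas_inner {R : realType} {d' : measure_display} {Xs : measurableType d'}
  {H : lmodType R} (inner : H -> H -> R) (k : Xs -> Xs -> R) (phi : Xs -> H) :
  is_rkhs inner k phi -> measurable_fun setT (fun z : Xs * Xs => k z.1 z.2) ->
  forall h, measurable_fun setT (fun x => inner h (phi x)).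
Proof.
case=> [[isym ilin ipos idef _] hk hdense] mk h.
have span_meas v : in_span (range phi) v ->
    measurable_fun setT (fun x => inner v (phi x)).
  case=> n [c [a [ha ->]]].
  have -> : (fun x => inner (\sum_(i < n) c i *: a i) (phi x)) =
      (fun x => \sum_(i < n) c i * inner (a i) (phi x)).
    apply: funext => x; rewrite (inner_suml isym ilin ipos idef).
    by apply: eq_bigr => i _; rewrite (innerZl isym ilin ipos idef).
  apply: measurable_sum => i.
  have [x0 _ <-] := ha i (ltn_ord i).
  apply: measurable_realfun.measurable_funM => //.
  under eq_fun do rewrite hk.
  exact: (measurable_fun_pair2 x0 mk).
have hv (n : nat) : exists v, in_span (range phi) v /\
    hnorm inner (h - v) < n.+1%:R^-1.
  by apply: hdense; rewrite invr_gt0.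
have [f hf] := choice hv.
apply: (measurable_realfun.measurable_fun_cvg (h := fun n x => inner (f n) (phi x))).
  by move=> n; apply: span_meas; case: (hf n).
move=> x _; apply/cvgrPdist_lt => eps ep.
set K := hnorm inner (phi x).
have K0 : 0 <= K by apply: hnorm_ge0.
have hb := archi_boundP (divr_ge0 K0 (ltW ep)).
exists (Num.bound (K / eps)) => // n /= Nn.
rewrite -(innerBl isym ilin ipos idef).
apply: le_lt_trans (CSn isym ilin ipos idef _ _) _.
apply: (@le_lt_trans _ _ (n.+1%:R^-1 * K)).
  by apply: ler_wpM2r => //; apply/ltW; case: (hf n).
rewrite mulrC ltr_pdivrMr ?ltr0Sn // mulrC -ltr_pdivrMr //.
apply: (lt_le_trans hb); rewrite ler_nat; exact: leqW.
Qed.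
Section PC.
Context {d : measure_display} {T : measurableType d} {R : realType}.
Variable P : probability T R.

Lemma prob_ge0 A : 0 <= prob P A.
Proof. by rewrite /prob fine_ge0 // measure_ge0. Qed.

Lemma prob_setT : prob P setT = 1.
Proof. by rewrite /prob probability_setT. Qed.

Lemma prob_split A B : measurable A -> measurable B ->
  prob P A = prob P (A `&` B) + prob P (A `&` ~` B).
Proof.
move=> mA mB.
have mAB : measurable (A `&` B) by apply: measurableI.
have mAC : measurable (A `&` ~` B) by apply: measurableI => //; apply: measurableC.
rewrite /prob -fineD; try by apply: fin_num_measure.
rewrite -measureU //; first by rewrite -setIUr setUv setIT.
by rewrite setIACA setICr setI0.
Qed.

Lemma int_bdd (f : T -> R) M D : 0 <= M -> measurable_fun setT f ->
  {ae P, forall x, `|f x| <= M} -> measurable D -> P.-integrable D (EFin \o f).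
Proof.
move=> M0 mf hae mD; apply/integrableP; split.
  apply/measurable_realfun.measurable_EFinP; exact: measurable_funS mf.
apply: (@le_lt_trans _ _ (\int[P]_(x in D) (cst M%:E) x)%E).
  apply: ae_ge0_le_integral => //.
  - apply: (measurable_funS measurableT) => //; apply: measurableT_comp; first exact: measurable_realfun.abse_measurable.
    exact/measurable_realfun.measurable_EFinP.
  - case: hae => N [mN PN sub]; exists N; split => // x /= hx; apply: sub => /= h.
    by apply: hx => _; rewrite lee_fin.
rewrite integral_cst //; apply: lte_mul_pinfty => //; apply: (le_lt_trans (probability_le1 P mD)); exact: ltry.
Qed.

Lemma Rint_ae (f g : T -> R) D : measurable D -> measurable_fun setT f ->
  measurable_fun setT g -> {ae P, forall x, f x = g x} ->
  Rintegral P D f = Rintegral P D g.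
Proof.
move=> mD mf mg hae; rewrite /Rintegral; congr fine.
apply: ae_eq_integral => //.
- apply/measurable_realfun.measurable_EFinP; exact: measurable_funS mf.
- apply/measurable_realfun.measurable_EFinP; exact: measurable_funS mg.
- case: hae => N [mN PN sub]; exists N; split => // x /= hx; apply: sub => /= h.
  by apply: hx => _; rewrite h.
Qed.

Lemma Rint_split (f : T -> R) A B : measurable A -> measurable B ->
  P.-integrable A (EFin \o f) ->
  Rintegral P A f = Rintegral P (A `&` B) f + Rintegral P (A `&` ~` B) f.
Proof.
move=> mA mB hi.
have mAB : measurable (A `&` B) by apply: measurableI.
have mAC : measurable (A `&` ~` B) by apply: measurableI => //; apply: measurableC.
rewrite -Rintegral_setU //; first by rewrite -setIUr setUv setIT.
  by rewrite -setIUr setUv setIT.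
by rewrite /disj_set setIACA setICr setI0.
Qed.

Lemma markov_cell (g : T -> R) B t : measurable B -> measurable_fun setT g ->
  (forall x, 0 <= g x) -> P.-integrable B (EFin \o g) -> 0 < t ->
  t * prob P (B `&` [set x | t < g x]) <= Rintegral P B g.
Proof.
move=> mB mg g0 hi t0.
have mC : measurable [set x | t < g x].
  have -> : [set x | t < g x] = setT `&` g @^-1` `]t, +oo[%classic.
    by apply/seteqP; split => x /=; rewrite in_itv /= andbT //; case.
  exact: mg (measurable_itv _).
have mBC : measurable (B `&` [set x | t < g x]) by apply: measurableI.
rewrite (Rint_split mB mC hi) /prob -Rintegral_cst //.
have hiC : P.-integrable (B `&` [set x | t < g x]) (EFin \o g).
  by apply: integrableS hi.
apply: (@le_trans _ _ (Rintegral P (B `&` [set x | t < g x]) g)).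
  apply: le_Rintegral => //.
    exact: finite_measure_integrable_cst.
  by move=> x [_ /= /ltW].
by rewrite lerDl; apply: Rintegral_ge0.
Qed.

End PC.
Lemma key_id {R : realType} (pa pb aa ab ba bb : R) :
  pa * aa = (1 - pa) * ba -> pb * ab = (1 - pb) * bb ->
  (pa - pb) * (ab + bb) = (1 - pa) * (ba - bb) - pa * (aa - ab).
Proof. move=> h1 h2; lra. Qed.

Lemma key_half {R : realType} (pa pb aa ab ba bb W N0 N1 : R) :
  0 < pa < 1 -> 0 <= ab -> 0 <= bb ->
  pa * aa = (1 - pa) * ba -> pb * ab = (1 - pb) * bb ->
  `|ba - bb| <= W * N0 -> `|aa - ab| <= W * N1 ->
  `|pa - pb| * (ab + bb) <= W * (pa * N1 + (1 - pa) * N0).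
Proof.
move=> /andP[pa0 pa1] ab0 bb0 h1 h2 he0 he1.
rewrite -(ger0_norm (addr_ge0 ab0 bb0)) -normrM (key_id h1 h2).
apply: (le_trans (ler_normB _ _)).
rewrite !normrM (ger0_norm (ltW pa0)) ger0_norm ?subr_ge0 ?(ltW pa1) //.
have := ler_wpM2l (ltW pa0) he1.
have : 0 <= 1 - pa by rewrite subr_ge0 ltW.
move=> q; have := ler_wpM2l q he0.
move=> u v; lra.
Qed.

Lemma key_alg {R : realType} (p1a p0a p1b p0b I0a I0b N0 N1 W : R) :
  0 < p1a -> 0 < p0a -> 0 < p1b -> 0 < p0b -> 0 <= I0a -> 0 <= I0b ->
  p1a + p0a + (p1b + p0b) = 1 -> 0 <= W ->
  `|I0a / p0a - I0b / p0b| <= W * N0 ->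
  `|I0a / p1a - I0b / p1b| <= W * N1 ->
  `|p1a / (p1a + p0a) - p1b / (p1b + p0b)| * (2 * I0a + 2 * I0b) <=
  W * Num.max (p1a / (p1a + p0a) * N1 + (1 - p1a / (p1a + p0a)) * N0)
              (p1b / (p1b + p0b) * N1 + (1 - p1b / (p1b + p0b)) * N0).
Proof.
move=> h1a h0a h1b h0b Ia Ib hsum W0 he0 he1.
set pa := p1a / (p1a + p0a); set pb := p1b / (p1b + p0b).
set aa := I0a / p1a; set ba := I0a / p0a; set ab := I0b / p1b; set bb := I0b / p0b.
have sa : 0 < p1a + p0a by apply: addr_gt0.
have sb : 0 < p1b + p0b by apply: addr_gt0.
have paI : 0 < pa < 1.
  by rewrite divr_gt0 //= ltr_pdivrMr // mul1r ltrDl.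
have pbI : 0 < pb < 1.
  by rewrite divr_gt0 //= ltr_pdivrMr // mul1r ltrDl.
have aa0 : 0 <= aa by apply: divr_ge0 => //; apply: ltW.
have ba0 : 0 <= ba by apply: divr_ge0 => //; apply: ltW.
have ab0 : 0 <= ab by apply: divr_ge0 => //; apply: ltW.
have bb0 : 0 <= bb by apply: divr_ge0 => //; apply: ltW.
have eqa : pa * aa = (1 - pa) * ba.
  rewrite /pa /aa /ba; field.
  by rewrite !gt_eqF.
have eqb : pb * ab = (1 - pb) * bb.
  rewrite /pb /ab /bb; field.
  by rewrite !gt_eqF.
have e1a : p1a * aa = I0a by rewrite /aa mulrC divfK // gt_eqF.
have e0a : p0a * ba = I0a by rewrite /ba mulrC divfK // gt_eqF.
have e1b : p1b * ab = I0b by rewrite /ab mulrC divfK // gt_eqF.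
have e0b : p0b * bb = I0b by rewrite /bb mulrC divfK // gt_eqF.
have Ka := key_half paI ab0 bb0 eqa eqb he0 he1.
have he0' : `|bb - ba| <= W * N0 by rewrite distrC.
have he1' : `|ab - aa| <= W * N1 by rewrite distrC.
have Kb := key_half pbI aa0 ba0 eqb eqa he0' he1'.
rewrite distrC in Kb.
set rho := Num.max _ _.
have r1 : W * (pa * N1 + (1 - pa) * N0) <= W * rho.
  by rewrite ler_wpM2l // le_max lexx.
have r2 : W * (pb * N1 + (1 - pb) * N0) <= W * rho.
  by rewrite ler_wpM2l // le_max lexx orbT.
set D := `|pa - pb|.
have D0 : 0 <= D by apply: normr_ge0.
have ha : 2 * I0a <= (p1a + p0a) * (aa + ba).
  have := mulr_ge0 (ltW h0a) aa0; have := mulr_ge0 (ltW h1a) ba0; lra.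
have hb : 2 * I0b <= (p1b + p0b) * (ab + bb).
  have := mulr_ge0 (ltW h0b) ab0; have := mulr_ge0 (ltW h1b) bb0; lra.
have ha' := ler_wpM2l D0 ha.
have hb' := ler_wpM2l D0 hb.
have Ka' := ler_wpM2l (ltW sb) (le_trans Ka r1).
have Kb' := ler_wpM2l (ltW sa) (le_trans Kb r2).
have hs : (p1a + p0a) * (W * rho) + (p1b + p0b) * (W * rho) = W * rho.
  by rewrite -mulrDl hsum mul1r.
rewrite /D in ha' hb' *; clear D D0.
move: ha' hb' Ka' Kb' hs; rewrite !mulrDr; lra.
Qed.
Unset Implicit Arguments. Set Strict Implicit. Set Printing Implicit Defensive.
Theorem theorem8
  (R : realType) (d d' : measure_display)
  (Omega : measurableType d) (P : probability Omega R)
  (Xs : measurableType d') (X : Omega -> Xs) (Y G : Omega -> bool)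
  (H : lmodType R) (inner : H -> H -> R)
  (k : Xs -> Xs -> R) (phi : Xs -> H) (kappa : R)
  (mu : H) (Sigma : H -> H) (lambda : nat -> R) (e : nat -> H)
  (alpha c1 c2 : R)
  (muYG : bool -> bool -> H)
  (r Rb : R) (u : bool -> H)
  (w : H) (W : R) :
  let Gev g := [set om | G om = g] in
  let YGev y g := [set om | Y om = y /\ G om = g] in
  let p g := prob P (YGev true g) / prob P (Gev g) in
  let EQ (f : Xs -> R) :=
    (cexp P (Gev true) (f \o X) + cexp P (Gev false) (f \o X)) / 2 in
  let delta y := muYG y true - muYG y false in
  let S om := inner w (phi (X om)) in
  (* the random variables *)
  measurable_fun setT X ->
  measurable (Y @^-1` [set true]) ->
  measurable (G @^-1` [set true]) ->
  (forall g, 0 < prob P (Gev g)) ->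
  (forall g, 0 < p g < 1) ->
  p true - p false != 0 ->
  (* kernel, RKHS, feature map, boundedness *)
  measurable_fun setT (fun z : Xs * Xs => k z.1 z.2) ->
  pd_kernel k ->
  is_rkhs inner k phi ->
  (forall x, k x x <= kappa ^+ 2) ->
  (* mean and covariance of phi(X) under Q = (P_a + P_b)/2 *)
  (forall h, inner mu h = EQ (fun x => inner (phi x) h)) ->
  (forall h h', inner (Sigma h) h' =
     EQ (fun x => inner (phi x - mu) h * inner (phi x - mu) h')) ->
  (* spectral decomposition Sigma = sum_j lambda_j e_j (x) e_j *)
  (forall i j, (0 < i)%N -> (0 < j)%N -> inner (e i) (e j) = (i == j)%:R) ->
  (forall h, hlim inner
     (fun n => \sum_(1 <= j < n.+1) (lambda j * inner (e j) h) *: e j)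
     (Sigma h)) ->
  (forall j, (0 < j)%N -> lambda j.+1 <= lambda j) ->
  (forall j, (0 < j)%N -> 0 <= lambda j) ->
  (* polynomial eigenvalue decay *)
  1 < alpha -> 0 < c1 -> 0 < c2 ->
  (forall j, (0 < j)%N ->
     c1 * powR (j%:R) (- alpha) <= lambda j <= c2 * powR (j%:R) (- alpha)) ->
  (* conditional mean embeddings *)
  (forall y g h, inner (muYG y g) h =
     cexp P (YGev y g) (fun om => inner (phi (X om)) h)) ->
  (* source condition delta_y = Sigma^r u_y, ||u_y|| <= Rb *)
  0 < r -> 0 < Rb ->
  (forall y, hnorm inner (u y) <= Rb) ->
  (forall y, hlim inner
     (fun n => \sum_(1 <= j < n.+1) (powR (lambda j) r * inner (e j) (u y)) *: e j)
     (delta y)) ->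
  (* the score S = <w, phi(X)> *)
  hnorm inner w <= W ->
  {ae P, forall om, 0 <= S om <= 1} ->
  (forall g, cexp P (Gev g) S = p g) ->
  (forall m : nat,
     projV inner e m (delta false) = 0 ->
     projV inner e m (delta true) = 0 ->
     let rho := Num.max
        (p true * hnorm inner (delta true) + (1 - p true) * hnorm inner (delta false))
        (p false * hnorm inner (delta true) + (1 - p false) * hnorm inner (delta false)) in
     [/\ rho <= Rb * powR (lambda m.+1) r,
         c1 `^ r * powR (m.+1%:R) (- (alpha * r)) <= powR (lambda m.+1) r
           <= c2 `^ r * powR (m.+1%:R) (- (alpha * r))
       & forall t : R, 0 < t <= 1 ->
           prob P [set om | t < `|S om - (Y om)%:R|]
             <= W * Rb * powR (lambda m.+1) r / (`|p true - p false| * t)])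
  /\
  ((forall N : nat, exists m : nat, (N <= m)%N /\
      projV inner e m (delta false) = 0 /\ projV inner e m (delta true) = 0) ->
   {ae P, forall om, S om = (Y om)%:R}).
Proof.
move=> Gev YGev p EQ delta S mX mY mG hPG hp hdp mk pdk rkhs kb hmu hSig eorth
  hSigexp lmono lpos alpha1 c1p c2p ldecay hmuYG r0 Rb0 hu hdelta hW hS01 hSp.
case: (rkhs) => [[isym ilin ipos idef _] hk hdense].
have W0 : 0 <= W := le_trans (hnorm_ge0 isym ilin ipos idef w) hW.
have lam_anti i j : (0 < i)%N -> (i <= j)%N -> lambda j <= lambda i.
  move=> i0; elim: j => [|j IH]; first by rewrite leqn0 => /eqP h; rewrite h in i0.
  rewrite leq_eqVlt => /orP[/eqP ->//|]; rewrite ltnS => ij.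
  apply: le_trans (IH ij); apply: lmono; exact: leq_trans i0 ij.
have powmono x y : 0 <= x -> x <= y -> powR x r <= powR y r.
  by move=> x0 xy; apply: (ge0_ler_powR (ltW r0)) => //; rewrite nnegrE //; apply: le_trans xy.
have part2 m : c1 `^ r * powR (m.+1%:R) (- (alpha * r)) <= powR (lambda m.+1) r
           <= c2 `^ r * powR (m.+1%:R) (- (alpha * r)).
  have /andP[h1 h2] := ldecay m.+1 (ltn0Sn m).
  have ee c : 0 <= c -> powR (c * powR (m.+1%:R) (- alpha)) r =
      c `^ r * powR (m.+1%:R) (- (alpha * r)).
    by move=> c0; rewrite powRM ?powR_ge0 // -powRrM mulNr.
  rewrite -ee ?(ltW c1p) // -ee ?(ltW c2p) //.
  apply/andP; split; apply: powmono => //.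
  - by apply: mulr_ge0; [apply: ltW|apply: powR_ge0].
  - by apply: lpos.
have normd m y : projV inner e m (delta false) = 0 -> projV inner e m (delta true) = 0 ->
    hnorm inner (delta y) <= Rb * powR (lambda m.+1) r.
  move=> z0 z1.
  have B0 : 0 <= powR (lambda m.+1) r by apply: powR_ge0.
  have := @tail_bound R H inner isym ilin ipos idef e eorth
     (fun j => powR (lambda j) r) (u y) (delta y) m _ B0.
  move=> /(_ _ (hdelta y)) h.
  have {h} h : hnorm inner (delta y) <= powR (lambda m.+1) r * hnorm inner (u y).
    apply: h; last by case: y.
    move=> j mj; rewrite ger0_norm ?powR_ge0 //; apply: powmono; first by apply: lpos; exact: leq_ltn_trans mj.
    by apply: lam_anti.
  apply: (le_trans h); rewrite mulrC; apply: ler_wpM2r => //.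
have mS : measurable_fun setT S.
  exact: measurableT_comp (meas_inner rkhs mk w) mX.
have mYs y : measurable [set om | Y om = y].
  case: y; first exact: mY.
  have -> : [set om | Y om = false] = ~` (Y @^-1` [set true]).
    by apply/seteqP; split => om /=; case: (Y om) => //.
  exact: measurableC.
have mGs g : measurable [set om | G om = g].
  case: g; first exact: mG.
  have -> : [set om | G om = false] = ~` (G @^-1` [set true]).
    by apply/seteqP; split => om /=; case: (G om) => //.
  exact: measurableC.
have mA y g : measurable (YGev y g) := measurableI _ _ (mYs y) (mGs g).
have mYR : measurable_fun setT (fun om => (Y om)%:R : R).
  have -> : (fun om => (Y om)%:R : R) = \1_[set om | Y om = true].
    apply: funext => om; rewrite indicE; case hY: (Y om).
      by rewrite (mem_set (hY : [set om0 | Y om0 = true] om)).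
    by rewrite memNset //= hY.
  exact: measurable_indic.
have ae_mono (A B : Omega -> Prop) : {ae P, forall om, A om} ->
    (forall om, A om -> B om) -> {ae P, forall om, B om}.
  move=> [N [mN PN sub]] AB; exists N; split => // om /= hB; apply: sub => /= hA.
  by apply: hB; apply: AB.
have habs : {ae P, forall om, `|S om| <= 1}.
  by apply: (ae_mono _ _ hS01) => om /andP[h0 h1]; rewrite ger0_norm.
have iS D : measurable D -> P.-integrable D (EFin \o S).
  by move=> mD; apply: (int_bdd ler01 mS habs mD).
have Gsplit (g : bool) : Gev g = YGev true g `|` YGev false g.
  by apply/seteqP; split => om; rewrite /Gev /YGev /=; case: (Y om); intuition.
have dis g : YGev true g `&` YGev false g = set0.
  by apply/seteqP; split => om //; rewrite /YGev /= => -[[-> _] [h _]].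
set pr := fun y g => prob P (YGev y g).
set In := fun y g => Rintegral P (YGev y g) S.
have hGs g : prob P (Gev g) = pr true g + pr false g.
  rewrite /pr /prob (Gsplit g) measureU //; first by rewrite fineD //; apply: fin_num_measure.
have hIs g : Rintegral P (Gev g) S = In true g + In false g.
  rewrite /In (Gsplit g) Rintegral_setU //; first by rewrite -Gsplit; apply: iS; apply: mGs.
  by rewrite /disj_set dis.
have hGsum : prob P (Gev true) + prob P (Gev false) = 1.
  rewrite -(prob_setT P) (prob_split P measurableT (mGs true)) !setTI.
  congr (_ + prob P _).
  by apply/seteqP; split => om; rewrite /Gev /=; case: (G om).
have hpe g : p g = pr true g / (pr true g + pr false g) by rewrite /p -hGs.
have hpos g : 0 < pr true g /\ 0 < pr false g.
  have := hp g; have := hPG g; rewrite hpe hGs => h0 /andP[h1 h2].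
  move: h1 h2; rewrite ltr_pdivlMr // ltr_pdivrMr // mul0r mul1r => h1 h2.
  split => //; lra.
have hI1 g : In true g + In false g = pr true g.
  have := hSp g; rewrite /cexp /p => /(congr1 (fun x => x * prob P (Gev g))).
  by rewrite !divfK ?gt_eqF // -hIs.
have mSc c : measurable_fun setT (fun om => `|S om - c|).
  apply: measurableT_comp => //; apply: measurable_funB => //.
have iSc c D : measurable D -> P.-integrable D (EFin \o (fun om => `|S om - c|)).
  move=> mD; apply: (@int_bdd _ _ _ P _ (1 + `|c|)) => //.
  apply: (ae_mono _ _ habs) => om h; rewrite normr_id.
  by apply: (le_trans (ler_normB _ _)); rewrite lerD2r.
have i1 D : measurable D -> P.-integrable D (EFin \o (fun _ : Omega => 1 : R)).
  by move=> mD; apply: finite_measure_integrable_cst.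
set bad := fun t => [set om | t < `|S om - (Y om)%:R|].
have cell1 g t : 0 < t -> t * prob P (YGev true g `&` bad t) <= pr true g - In true g.
  move=> t0.
  have := markov_cell (mA true g) (mSc 1) (fun om => normr_ge0 _) (iSc 1 _ (mA true g)) t0.
  have -> : YGev true g `&` [set x | t < `|S x - 1|] = YGev true g `&` bad t.
    by apply/seteqP; split => om [[hy hg] h]; split => //=; move: h; rewrite /bad /= hy.
  move=> h; apply: (le_trans h).
  rewrite (Rint_ae (g := fun om => 1 - S om)) //.
  - rewrite RintegralB //; [|exact: i1|exact: iS].
    by rewrite Rintegral_cst // mul1r.
  - by change (measurable_fun setT ((cst (1:R)) \- S)); apply: measurable_funB.
  - apply: (ae_mono _ _ hS01) => om /andP[_ h1].
    by rewrite ler0_norm ?subr_le0 // opprB.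
have cell0 g t : 0 < t -> t * prob P (YGev false g `&` bad t) <= In false g.
  move=> t0.
  have := markov_cell (mA false g) (mSc 0) (fun om => normr_ge0 _) (iSc 0 _ (mA false g)) t0.
  have -> : YGev false g `&` [set x | t < `|S x - 0|] = YGev false g `&` bad t.
    by apply/seteqP; split => om [[hy hg] h]; split => //=; move: h; rewrite /bad /= hy.
  move=> h; apply: (le_trans h).
  rewrite (Rint_ae (g := S)) //.
  apply: (ae_mono _ _ hS01) => om /andP[h0 _].
  by rewrite subr0 ger0_norm.
have hI0 g : 0 <= In false g.
  rewrite /In (Rint_ae (g := fun om => `|S om - 0|)) //.
  - by apply: Rintegral_ge0.
  - apply: (ae_mono _ _ hS01) => om /andP[h0 _].
    by rewrite subr0 ger0_norm.
have mbadf : measurable_fun setT (fun om => `|S om - (Y om)%:R|).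
  by apply: measurableT_comp => //; apply: measurable_funB.
have mbad t : measurable (bad t).
  have -> : bad t = setT `&` (fun om => `|S om - (Y om)%:R|) @^-1` `]t, +oo[%classic.
    by apply/seteqP; split => om /=; rewrite in_itv /= andbT //; case.
  exact: mbadf (measurable_itv _).
have badsplit t : prob P (bad t) =
    prob P (YGev true true `&` bad t) + prob P (YGev false true `&` bad t) +
    (prob P (YGev true false `&` bad t) + prob P (YGev false false `&` bad t)).
  rewrite (prob_split P (mbad t) (mGs true)).
  rewrite (prob_split P (measurableI _ _ (mbad t) (mGs true)) (mYs true)).
  rewrite (prob_split P (measurableI _ _ (mbad t) (measurableC (mGs true))) (mYs true)).
  congr (_ + _ + (_ + _)).
  1-4: congr (prob P _); apply/seteqP; split => om /=; rewrite /YGev /=.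
  1-8: case: (Y om); case: (G om).
  1-32: intuition (try discriminate).
have hinner y : inner (delta y) w = In y true / pr y true - In y false / pr y false.
  rewrite /delta (innerBl isym ilin ipos idef) !hmuYG /cexp.
  by congr (_ / _ - _ / _); apply: eq_Rintegral => om _; apply: isym.
have hCS y : `|inner (delta y) w| <= W * hnorm inner (delta y).
  apply: (le_trans (CSn isym ilin ipos idef _ _)); rewrite mulrC.
  by apply: ler_wpM2r => //; apply: hnorm_ge0.
have Dp0 : 0 < `|p true - p false| by rewrite normr_gt0.
have e1 g : In true g / pr true g = 1 - In false g / pr true g.
  have hg := (hpos g).1.
  rewrite -[In true g](addrK (In false g)) hI1 mulrBl divff ?gt_eqF //.
have rhole m : projV inner e m (delta false) = 0 -> projV inner e m (delta true) = 0 ->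
      Num.max
        (p true * hnorm inner (delta true) + (1 - p true) * hnorm inner (delta false))
        (p false * hnorm inner (delta true) + (1 - p false) * hnorm inner (delta false))
        <= Rb * powR (lambda m.+1) r.
    move=> z0 z1; have hN y := normd m y z0 z1.
    rewrite ge_max; apply/andP; split.
    - have /andP[q0 q1] := hp true.
      have := ler_wpM2l (ltW q0) (hN true).
      have : 0 <= 1 - p true by rewrite subr_ge0 ltW.
      move=> q2; have := ler_wpM2l q2 (hN false); lra.
    - have /andP[q0 q1] := hp false.
      have := ler_wpM2l (ltW q0) (hN true).
      have : 0 <= 1 - p false by rewrite subr_ge0 ltW.
      move=> q2; have := ler_wpM2l q2 (hN false); lra.
have he0 m : projV inner e m (delta false) = 0 -> projV inner e m (delta true) = 0 ->
    forall t, 0 < t -> t <= 1 ->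
    prob P (bad t) <= W * Rb * powR (lambda m.+1) r / (`|p true - p false| * t).
  move=> z0 z1 t t0 t1.
  have rho_le := rhole m z0 z1.
  have key := @key_alg R (pr true true) (pr false true) (pr true false) (pr false false)
     (In false true) (In false false) (hnorm inner (delta false))
     (hnorm inner (delta true)) W (hpos true).1 (hpos true).2 (hpos false).1
     (hpos false).2 (hI0 true) (hI0 false).
  rewrite -!hpe -!hGs hGsum in key.
  have := key erefl W0.
  have ha : `|In false true / pr false true - In false false / pr false false| <=
      W * hnorm inner (delta false) by rewrite -hinner; apply: hCS.
  have hb : `|In false true / pr true true - In false false / pr true false| <=
      W * hnorm inner (delta true).
    apply: le_trans (hCS true); rewrite hinner !e1.
    have -> : forall a b : R, 1 - a - (1 - b) = - (a - b) by move=> a b; ring.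
    by rewrite normrN.
  move=> /(_ ha hb) K.
  have C : t * prob P (bad t) <= 2 * In false true + 2 * In false false.
    rewrite badsplit !mulrDr.
    have := cell1 true t t0; have := cell1 false t t0.
    have := cell0 true t t0; have := cell0 false t t0.
    have := hI1 true; have := hI1 false; lra.
  have C2 := ler_wpM2l (normr_ge0 (p true - p false)) C.
  have C3 := ler_wpM2l W0 rho_le.
  rewrite ler_pdivlMr; last by apply: mulr_gt0.
  move: C2 C3 K; set D := `|p true - p false|; set M := Num.max _ _.
  move=> C2 C3 K.
  have : prob P (bad t) * (D * t) = D * (t * prob P (bad t)) by ring.
  lra.
split.
  move=> m z0 z1 rho; split; first exact: rhole.
    exact: part2.
  by move=> t /andP[t0 t1]; apply: he0.
move=> hinf.
have small dd : 0 < dd -> exists N, forall m, (N <= m)%N -> powR (lambda m.+1) r <= dd.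
  move=> d0.
  have eta0 : 0 < powR dd r^-1 by apply: powR_gt0.
  exists (Num.bound (c2 / powR dd r^-1)) => m hm.
  have hb := archi_boundP (divr_ge0 (ltW c2p) (ltW eta0)).
  have m1 : c2 / powR dd r^-1 < m.+1%:R.
    by apply: (lt_le_trans hb); rewrite ler_nat; exact: leqW.
  have lm : lambda m.+1 <= powR dd r^-1.
    have /andP[_ h2] := ldecay m.+1 (ltn0Sn m).
    apply: (le_trans h2).
    have h3 : powR m.+1%:R (- alpha) <= m.+1%:R^-1.
      rewrite -powR_inv1 ?ler0n //; apply: ler_powR; [by rewrite ler1n | lra].
    apply: (le_trans (ler_wpM2l (ltW c2p) h3)).
    move: m1; rewrite ltr_pdivrMr // => m1.
    by rewrite ler_pdivrMr ?ltr0Sn // mulrC; exact: ltW.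
  apply: (le_trans (powmono _ _ (lpos _ (ltn0Sn m)) lm)).
  by rewrite -powRrM mulVf ?gt_eqF // powRr1 //; exact: ltW.
have zero n : prob P (bad n.+1%:R^-1) = 0.
  have t0 : 0 < n.+1%:R^-1 :> R by rewrite invr_gt0.
  have t1 : n.+1%:R^-1 <= 1 :> R by rewrite invf_le1 // ler1n.
  apply/le_anti; rewrite prob_ge0 andbT.
  have [//|lt] := leP (prob P (bad n.+1%:R^-1)) 0.
  have K0 : 0 <= W * Rb / (`|p true - p false| * n.+1%:R^-1).
    by apply: divr_ge0; [apply: mulr_ge0 => //; apply: ltW | apply: ltW; apply: mulr_gt0].
  have Kp : 0 < W * Rb / (`|p true - p false| * n.+1%:R^-1) + 1.
    by apply: ltr_wpDl.
  have [N HN] := small _ (divr_gt0 lt Kp).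
  have [m [Nm [z0 z1]]] := hinf N.
  have h := he0 m z0 z1 _ t0 t1.
  have h2 := HN m Nm.
  rewrite mulrAC in h.
  have h3 := ler_wpM2l K0 h2.
  have h4 : W * Rb / (`|p true - p false| * n.+1%:R^-1) *
      (prob P (bad n.+1%:R^-1) / (W * Rb / (`|p true - p false| * n.+1%:R^-1) + 1))
      < prob P (bad n.+1%:R^-1).
    rewrite mulrA ltr_pdivrMr //; nra.
  lra.
have nb n : {ae P, forall om, ~ bad n.+1%:R^-1 om}.
  exists (bad n.+1%:R^-1); split => //.
  - have := zero n; rewrite /prob => h.
    by rewrite -(fineK (fin_num_measure P _ (mbad _))) h.
  - by move=> om /=; case: (pselect (bad n.+1%:R^-1 om)) => // hb /(_ hb).
apply: (ae_mono _ _ (ae_foralln nb)) => om hall.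
apply/eqP; rewrite -subr_eq0 -normr_eq0; apply/negPn/negP => ne.
have x0 : 0 < `|S om - (Y om)%:R| by rewrite lt_def ne normr_ge0.
have xi : 0 < `|S om - (Y om)%:R|^-1 by rewrite invr_gt0.
have hb := archi_boundP (ltW xi).
apply: (hall (Num.bound (`|S om - (Y om)%:R|^-1))).
rewrite /bad /= -[X in _ < X]invrK ltf_pV2 ?posrE ?invr_gt0 ?ltr0Sn //.
apply: (lt_le_trans hb); rewrite ler_nat; exact: leqnSn.
Qed.
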